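(* Let $t\ge3$ be an integer. Every $t$-villa is $(2P_3,C_4,C_6,C_7,T_0)$-free and contains an induced $t$-pentagon. Moreover, every $t$-villa is anticonnected and contains no simplicial and no universal vertices.
   Context: Graphs are finite, simple, nonnull. A graph is $(H_1,\dots,H_m)$-free if it has no induced subgraph isomorphic to any $H_i$. $P_k$, $C_k$ are the path and cycle on $k$ vertices; $2P_3$ is two disjoint copies of $P_3$. $T_0$ is the graph with vertices $p,q,u_0,u_1,u_2,u_3,w_1,w_2,w_3$ and edges $pq,pu_0,pu_2,pu_3,qu_1,qu_2,qu_3,u_0w_1,u_1w_1,u_2w_2,u_3w_3,w_1w_2,w_1w_3,w_2w_3$. For $t\ge3$ the $t$-pentagon is the graph on vertices $a,b_1,\dots,b_t,c_1,\dots,c_t$ where $a$ is adjacent to every $b_i$ and to no $c_i$, $\{b_1,\dots,b_t\}$ is stable, $\{c_1,\dots,c_t\}$ is a clique, and $b_ic_j$ is an edge iff $i=j$. A graph is anticonnected if its complement is connected. A vertex is simplicial if its neighbours form a (possibly empty) clique, universal if adjacent to all other vertices. For disjoint vertex sets $X,Y$, $X$ is complete (anticomplete) to $Y$ if every vertex of $X$ is adjacent (nonadjacent) to every vertex of $Y$. A $t$-villa is a graph $Q$ whose vertex set partitions into nonempty cliques $A,B_1,\dots,B_t,C_1,\dots,C_t$ such that $A$ is complete to $B_1\cup\dots\cup B_t$ and anticomplete to $C_1\cup\dots\cup C_t$; the $B_i$ are pairwise anticomplete; the $C_i$ are pairwise complete; $B_i$ is anticomplete to $C_j$ for $i\ne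 j$; and each $B_i$ can be ordered $b^i_1,\dots,b^i_{r_i}$ with $\emptyset\ne N(b^i_{r_i})\cap C_i\subseteq\dots\subseteq N(b^i_1)\cap C_i=C_i$. *)

(* Defs.v *)
(* Graphs: a finType V with a symmetric irreflexive rel E. *)
From mathcomp Require Import all_boot.
Set Implicit Arguments. Unset Strict Implicit. Unset Printing Implicit Defensive.

Section Graphs.
Variables (V : finType) (E : rel V).

Definition has_induced (H : finType) (EH : rel H) : Prop :=
  exists f : H -> V, injective f /\ forall x y, EH x y = E (f x) (f y).

Definition H_free (H : finType) (EH : rel H) : Prop := ~ has_induced EH.

Definition is_clique (S : {set V}) : Prop :=
  forall x y, x \in S -> y \in S -> x != y -> E x y.
Definition complete_to (X Y : {set V}) : Prop :=
  forall x y, x \in X -> y \in Y -> E x y.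
Definition anticomplete_to (X Y : {set V}) : Prop :=
  forall x y, x \in X -> y \in Y -> ~~ E x y.

Definition compl_rel : rel V := fun x y => (x != y) && ~~ E x y.
Definition anticonnected : Prop := forall x y, connect compl_rel x y.

Definition simplicial (v : V) : Prop :=
  forall y z, E v y -> E v z -> y != z -> E y z.
Definition universal (v : V) : Prop := forall y, y != v -> E v y.

Definition nbhd_in (b : V) (C : {set V}) : {set V} := [set c in C | E b c].

(* t-villa. The partition into A, B_1..B_t, C_1..C_t is encoded by a labelling
   part : V -> option ('I_t + 'I_t): None = A, Some (inl i) = B_i,
   Some (inr i) = C_i. *)
Definition is_villa (t : nat) : Prop :=
  exists part : V -> option ('I_t + 'I_t),
    let A := [set v | part v == None] in
    let B := fun i : 'I_t => [set v | part v == Some (inl i)] in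
    let C := fun i : 'I_t => [set v | part v == Some (inr i)] in
    (A != set0 /\ (forall i, B i != set0) /\ (forall i, C i != set0)) /\
    (is_clique A /\ (forall i, is_clique (B i)) /\ (forall i, is_clique (C i))) /\
    ((forall i, complete_to A (B i)) /\ (forall i, anticomplete_to A (C i))) /\
    ((forall i j, i != j -> anticomplete_to (B i) (B j))
       /\ (forall i j, i != j -> complete_to (C i) (C j))
       /\ (forall i j, i != j -> anticomplete_to (B i) (C j))) /\
    (forall i, exists s : seq V,
        [/\ uniq s, [set x in s] = B i,
             sorted (fun x y => nbhd_in y (C i) \subset nbhd_in x (C i)) s,
             (forall x0, nbhd_in (head x0 s) (C i) = C i)
           & (forall x0, nbhd_in (last x0 s) (C i) != set0)]).
End Graphs.

Definition cycle_rel (k : nat) : rel 'I_k :=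
  fun x y => (y == (x.+1 %% k) :> nat) || (x == (y.+1 %% k) :> nat).

Arguments cycle_rel k : clear implicits.

Definition twoP3_rel : rel 'I_6 :=
  fun x y => let e a b := ((x : nat) == a) && ((y : nat) == b) in
    [|| e 0 1, e 1 0, e 1 2, e 2 1, e 3 4, e 4 3, e 4 5 | e 5 4].

(* T0 on 'I_9: p=0, q=1, u0=2, u1=3, u2=4, u3=5, w1=6, w2=7, w3=8 *)
Definition T0_edges : seq (nat * nat) :=
  [:: (0,1); (0,2); (0,4); (0,5); (1,3); (1,4); (1,5); (2,6); (3,6);
      (4,7); (5,8); (6,7); (6,8); (7,8)].
Definition T0_rel : rel 'I_9 :=
  fun x y => ((x : nat, y : nat) \in T0_edges) || ((y : nat, x : nat) \in T0_edges).

(* t-pentagon on option ('I_t + 'I_t): None = a, inl i = b_i, inr i = c_i *)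
Definition pentagon_rel (t : nat) : rel (option ('I_t + 'I_t)) :=
  fun x y => match x, y with
  | None, Some (inl _) | Some (inl _), None => true
  | Some (inl i), Some (inr j) | Some (inr j), Some (inl i) => i == j
  | Some (inr i), Some (inr j) => i != j
  | _, _ => false
  end.
Arguments pentagon_rel t : clear implicits.

(* Main.v *)
Require Import Defs.
From mathcomp Require Import all_boot.
Set Implicit Arguments. Unset Strict Implicit. Unset Printing Implicit Defensive.


Fixpoint allk (n : nat) : seq (seq nat) :=
  if n is n'.+1 then flatten [seq [seq a :: s | s <- allk n'] | a <- [:: 0; 1; 2]]
  else [:: [::]].

Lemma allk_mem n s : size s = n -> all (fun a => a < 3) s -> s \in allk n.
Proof.
elim: n s => [|n IH]; first by case => //= a s.
case=> [|a s] //=.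
move=> [hs].

case/andP => ha hall.
have ic : forall b : nat, injective (cons b) by move=> b ? ? [].
have IHs := IH s hs hall.
move: ha; case: a => [|[|[|a]]] // _; rewrite !mem_cat ?(mem_map (ic _)) IHs ?orbT //.
Qed.

Definition kvalidN n (R : nat -> nat -> bool) (s : seq nat) : bool :=
  let k x := nth 0 s x in
  let I := iota 0 n in
  if all (fun x => all (fun y => if x == y then true else
     if k x == 0 then (if k y == 2 then ~~ R x y else R x y)
     else if k x == 2 then (if k y == 2 then R x y else true) else true) I) I
  then if all (fun x => if k x == 1 then all (fun y => if k y == 0 then true else if R x y then all (fun z =>
        if x == z then true else if k z == 1 then (if R y z then R x z else true) else true) I else true) I else true) I
  then all (fun b => if k b == 1 then all (fun b' => if k b' == 1 then (if R b b' then all (fun c => if k c == 2 then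
        (if R b c then (if R b' c then true else all (fun c' =>
        if k c' == 2 then (if R b' c' then R b c' else true) else true) I) else true) else true) I else true) else true) I else true) I
  else false else false.

Lemma kvalidN_intro n R (s : seq nat) :
  let k x := nth 0 s x in
  (forall x, x < n -> k x < 3) ->
  (forall x y, x < n -> y < n -> x != y -> k x = 0 -> k y = 2 -> ~~ R x y) ->
  (forall x y, x < n -> y < n -> x != y -> k x = 0 -> k y < 2 -> R x y) ->
  (forall x y, x < n -> y < n -> x != y -> k x = 2 -> k y = 2 -> R x y) ->
  (forall x y z, x < n -> y < n -> z < n -> x != z -> k x = 1 -> k y != 0 -> R x y -> k z = 1 -> R y z -> R x z) ->
  (forall b b' c c', b < n -> b' < n -> c < n -> c' < n -> k b = 1 -> k b' = 1 -> R b b' -> k c = 2 -> R b c ->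
      ~~ R b' c -> k c' = 2 -> R b' c' -> R b c') ->
  kvalidN n R s.
Proof.
move=> k h3 h1 h2 h4 h5 h6.
have mI x : (x \in iota 0 n) = (x < n) by rewrite mem_iota.
rewrite /kvalidN.
case: ifP => [_|/negbT/negP[]]; last first.
  apply/allP => x; rewrite mI => hx; apply/allP => y; rewrite mI => hy.
  case: eqP => // /eqP nxy.
  have := h3 x hx; have := h3 y hy; rewrite /k.
  case kx: (nth 0 s x) => [|[|[|?]]] //; case ky: (nth 0 s y) => [|[|[|?]]] //= _ _.
  - by apply: h2 => //; rewrite /k ?kx ?ky.
  - by apply: h2 => //; rewrite /k ?kx ?ky.
  - by apply: h1 => //; rewrite /k ?kx ?ky.
  - by apply: h4 => //; rewrite /k ?kx ?ky.
case: ifP => [_|/negbT/negP[]]; last first.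
  apply/allP => x; rewrite mI => hx.
  case: eqP => // kx; apply/allP => y; rewrite mI => hy.
  case: eqP => // /eqP ky; case: ifP => // rxy.
  apply/allP => z; rewrite mI => hz.
  case: eqP => // /eqP nxz; case: eqP => // kz; case: ifP => // ryz.
  by apply: (h5 x y z).
apply/allP => b; rewrite mI => hb.
case: eqP => // kb; apply/allP => b'; rewrite mI => hb'.
case: eqP => // kb'; case: ifP => // rbb'.
apply/allP => c; rewrite mI => hc.
case: eqP => // kc; case: ifP => // rbc; case: ifP => // /negbT rb'c.
apply/allP => c'; rewrite mI => hc'.
case: eqP => // kc'; case: ifP => // rb'c'.
by apply: (h6 b b' c c').
Qed.

Record VF (t : nat) (V : finType) (E : rel V) (part : V -> option ('I_t + 'I_t)) : Prop := {
 vAA : forall u v, part u = None -> part v = None -> u != v -> E u v;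
 vAB : forall u v i, part u = None -> part v = Some (inl i) -> E u v;
 vAC : forall u v i, part u = None -> part v = Some (inr i) -> ~~ E u v;
 vBBs : forall u v i, part u = Some (inl i) -> part v = Some (inl i) -> u != v -> E u v;
 vBBd : forall u v i j, part u = Some (inl i) -> part v = Some (inl j) -> i != j -> ~~ E u v;
 vCC : forall u v i j, part u = Some (inr i) -> part v = Some (inr j) -> u != v -> E u v;
 vBCd : forall u v i j, part u = Some (inl i) -> part v = Some (inr j) -> i != j -> ~~ E u v;
 vchain : forall u v i, part u = Some (inl i) -> part v = Some (inl i) ->
    (forall c, part c = Some (inr i) -> E u c -> E v c) \/ (forall c, part c = Some (inr i) -> E v c -> E u c);
 vhead : forall i, exists b, part b = Some (inl i) /\ forall c, part c = Some (inr i) -> E b c;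
 vnbr : forall b i, part b = Some (inl i) -> exists c, part c = Some (inr i) /\ E b c;
 vA : exists a, part a = None;
 vC : forall i, exists c, part c = Some (inr i) }.

Definition kindo t (o : option ('I_t + 'I_t)) : nat :=
  match o with None => 0 | Some (inl _) => 1 | Some (inr _) => 2 end.

Lemma kind1 t (o : option ('I_t + 'I_t)) : kindo o = 1 -> exists i, o = Some (inl i).
Proof. by case: o => [[i|i]|] //= _; exists i. Qed.
Lemma kind2 t (o : option ('I_t + 'I_t)) : kindo o = 2 -> exists i, o = Some (inr i).
Proof. by case: o => [[i|i]|] //= _; exists i. Qed.
Lemma kind0 t (o : option ('I_t + 'I_t)) : kindo o = 0 -> o = None.
Proof. by case: o => [[i|i]|]. Qed.
Lemma kind_ne0 t (o : option ('I_t + 'I_t)) : kindo o != 0 ->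
  exists i, o = Some (inl i) \/ o = Some (inr i).
Proof. by case: o => [[i|i]|] //= _; exists i; [left|right]. Qed.
Lemma kind_lt2 t (o : option ('I_t + 'I_t)) : kindo o < 2 ->
  o = None \/ exists i, o = Some (inl i).
Proof. by case: o => [[i|i]|] //= _; [right; exists i|left]. Qed.

Section Facts.
Variables (t : nat) (V : finType) (E : rel V) (part : V -> option ('I_t + 'I_t)).
Let kind u := kindo (part u).

Lemma sameBB (F : VF E part) u v i j : part u = Some (inl i) -> part v = Some (inl j) -> E u v -> i = j.
Proof.
move=> pu pv e; case: (eqVneq i j) => // nij.
by move: (vBBd F pu pv nij); rewrite e.
Qed.
Lemma sameBC (F : VF E part) u v i j : part u = Some (inl i) -> part v = Some (inr j) -> E u v -> i = j.
Proof.
move=> pu pv e; case: (eqVneq i j) => // nij.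
by move: (vBCd F pu pv nij); rewrite e.
Qed.

Lemma F5 (F : VF E part) (Esym : symmetric E) u v w : u != w -> kind u = 1 -> kind v != 0 -> E u v ->
  kind w = 1 -> E v w -> E u w.
Proof.
move=> nuw /kind1[i pu] /kind_ne0[j pv] euv /kind1[l pw] evw.
rewrite Esym in evw.
case: pv => pv.
- have ij := sameBB F pu pv euv; have lj := sameBB F pw pv evw.
  subst; exact: (vBBs F pu pw nuw).
- have ij := sameBC F pu pv euv; have lj := sameBC F pw pv evw.
  subst; exact: (vBBs F pu pw nuw).
Qed.

Lemma F6 (F : VF E part) b b' c c' : kind b = 1 -> kind b' = 1 -> E b b' -> kind c = 2 -> E b c ->
  ~~ E b' c -> kind c' = 2 -> E b' c' -> E b c'.
Proof.
move=> /kind1[i pb] /kind1[j pb'] ebb' /kind2[l pc] ebc nb'c /kind2[m pc'] eb'c'.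
have ij := sameBB F pb pb' ebb'; have il := sameBC F pb pc ebc; have jm := sameBC F pb' pc' eb'c'.
subst.
case: (vchain F pb pb') => h.
- by rewrite (h c pc ebc) in nb'c.
- exact: h.
Qed.

Lemma no_embed (F : VF E part) (Esym : symmetric E) n R
  (Hc : all (fun s => ~~ kvalidN n R s) (allk n)) (g : nat -> V)
  (ginj : forall i j, i < n -> j < n -> g i = g j -> i = j)
  (gR : forall i j, i < n -> j < n -> R i j = E (g i) (g j)) : False.
Proof.
set s := mkseq (fun i => kind (g i)) n.
have ks : forall x, x < n -> nth 0 s x = kind (g x) by move=> x hx; rewrite nth_mkseq.
have hs : s \in allk n.
  apply: allk_mem; first by rewrite size_mkseq.
  by apply/allP => a /mapP[x _ ->]; rewrite /kind; case: (part _) => [[]|].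
have gne : forall x y, x < n -> y < n -> x != y -> g x != g y.
  by move=> x y hx hy; apply: contra => /eqP /(ginj _ _ hx hy) ->.
have := allP Hc s hs; apply/negP/negPn.
apply: kvalidN_intro => /=.
- by move=> x hx; rewrite ks // /kind; case: (part _) => [[]|].
- move=> x y hx hy nxy; rewrite !ks // gR // => /kind0 px /kind2[i py].
  exact: (vAC F px py).
- move=> x y hx hy nxy; rewrite !ks // gR // => /kind0 px /kind_lt2[py|[i py]].
  + exact: (vAA F px py (gne _ _ hx hy nxy)).
  + exact: (vAB F px py).
- move=> x y hx hy nxy; rewrite !ks // gR // => /kind2[i px] /kind2[j py].
  exact: (vCC F px py (gne _ _ hx hy nxy)).
- move=> x y z hx hy hz nxz; rewrite !ks // !gR //.
  exact: (F5 F Esym (gne _ _ hx hz nxz)).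
- move=> b b' c c' hb hb' hc hc'; rewrite !ks // !gR //.
  exact: (F6 F).
Qed.
End Facts.

Lemma VF_of t (V : finType) (E : rel V) : is_villa E t -> exists part : V -> option ('I_t + 'I_t), VF E part.
Proof.
case=> part /= [[hA [hB hC]] [[cA [cB cC]] [[AB AC] [[BB [CC BC]] hs]]]].
exists part.
set Cs := fun i : 'I_t => [set v | part v == Some (inr i)].
have inC : forall c i, part c = Some (inr i) -> c \in Cs i by move=> c i pc; rewrite inE pc.
have cmp : forall i, exists s : seq V, uniq s /\
   [/\ forall u, part u = Some (inl i) -> u \in s,
       forall u, u \in s -> part u = Some (inl i),
       forall x y, x \in s -> y \in s -> index x s <= index y s ->
          nbhd_in E y (Cs i) \subset nbhd_in E x (Cs i),
       forall x0, nbhd_in E (head x0 s) (Cs i) = Cs i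
     & forall x0, nbhd_in E (last x0 s) (Cs i) != set0].
  move=> i; have [s [us ss so sh sl]] := hs i; exists s; split => //; split => //.
  - move=> u pu; have : u \in [set x in s] by rewrite ss inE pu.
    by rewrite inE.
  - move=> u us'; have : u \in [set x in s] by rewrite inE.
    by rewrite ss inE => /eqP.
  move=> x y xs ys le.
  have tr : transitive (fun x y : V => nbhd_in E y (Cs i) \subset nbhd_in E x (Cs i)).
    by move=> a b c h1 h2; apply: subset_trans h2 h1.
  have rf : reflexive (fun x y : V => nbhd_in E y (Cs i) \subset nbhd_in E x (Cs i)).
    by move=> a; apply: subxx.
  have H := sorted_leq_nth tr rf x so.
  have := H (index x s) (index y s); rewrite !inE !index_mem xs ys !nth_index //.
  by apply.
have nbE : forall b c i, part c = Some (inr i) -> (c \in nbhd_in E b (Cs i)) = E b c.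
  by move=> b c i pc; rewrite /nbhd_in inE inC.
split.
- by move=> u v pu pv; apply: cA; rewrite inE ?pu ?pv.
- by move=> u v i pu pv; apply: (AB i); rewrite inE ?pu ?pv.
- by move=> u v i pu pv; apply: (AC i); rewrite inE ?pu ?pv.
- by move=> u v i pu pv; apply: (cB i); rewrite inE ?pu ?pv.
- by move=> u v i j pu pv nij; apply: (BB i j nij); rewrite inE ?pu ?pv.
- move=> u v i j pu pv nuv; case: (eqVneq i j) => [eij|nij].
  + by subst; apply: (cC j); rewrite // inE ?pu ?pv.
  + by apply: (CC i j nij); rewrite inE ?pu ?pv.
- by move=> u v i j pu pv nij; apply: (BC i j nij); rewrite inE ?pu ?pv.
- move=> u v i pu pv; have [s [uq [h1 h2 h3 _ _]] ] := cmp i.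
  have us := h1 u pu; have vs := h1 v pv.
  case: (leqP (index u s) (index v s)) => le.
  + right => c pc; rewrite -!(nbE _ _ _ pc) => hv.
    exact: (subsetP (h3 u v us vs le)).
  + left => c pc; rewrite -!(nbE _ _ _ pc) => hu.
    exact: (subsetP (h3 v u vs us (ltnW le))).
- move=> i; have [s [uq [h1 h2 h3 h4 _]] ] := cmp i.
  case: s uq h1 h2 h3 h4 => [|x s] uq h1 h2 h3 h4.
    by case/set0Pn: (hB i) => b; rewrite inE => /eqP /h1.
  exists x; split; first by apply: h2; rewrite inE eqxx.
  move=> c pc; rewrite -(nbE _ _ _ pc) (h4 x) /=; exact: inC.
- move=> b i pb; have [s [uq [h1 h2 h3 _ h5]] ] := cmp i.
  have bs := h1 b pb.
  have ls : last b s \in s.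
    by case: s {uq h1 h2 h3 h5} bs => [|x s] //= _; apply: mem_last.
  case/set0Pn: (h5 b) => c hc.
  have pc : part c = Some (inr i) by move: hc; rewrite inE inE => /andP[/eqP].
  exists c; split => //; rewrite -(nbE _ _ _ pc).
  apply: (subsetP (h3 b (last b s) bs ls _)) => //.
  have sz : 0 < size s by case: (s) bs.
  rewrite -(nth_last b) index_uniq // ?prednK //.
  by rewrite -ltnS prednK // index_mem.
- by case/set0Pn: hA => a; rewrite inE => /eqP; exists a.
- by move=> i; case/set0Pn: (hC i) => c; rewrite inE => /eqP; exists c.
Qed.


Lemma free_of t (V : finType) (E : rel V) (Esym : symmetric E) (part : V -> option ('I_t + 'I_t))
  (F : VF E part) m (EH : rel 'I_m.+1) (R : nat -> nat -> bool)
  (HR : forall x y : 'I_m.+1, EH x y = R x y)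
  (Hc : all (fun s => ~~ kvalidN m.+1 R s) (allk m.+1)) : H_free E EH.
Proof.
move=> [f [finj fE]].
apply: (no_embed F Esym Hc (g := fun i => f (inord i))).
- by move=> i j hi hj /finj /(congr1 (@nat_of_ord _)); rewrite !inordK.
- by move=> i j hi hj; rewrite -fE HR !inordK.
Qed.

Definition cycR k (x y : nat) := (y == (x.+1 %% k)) || (x == (y.+1 %% k)).
Definition twoR (x y : nat) := let e a b := (x == a) && (y == b) in
    [|| e 0 1, e 1 0, e 1 2, e 2 1, e 3 4, e 4 3, e 4 5 | e 5 4].
Definition T0N (x y : nat) : bool := ((x, y) \in T0_edges) || ((y, x) \in T0_edges).
Definition T0M := Eval vm_compute in [seq [seq T0N x y | y <- iota 0 9] | x <- iota 0 9].
Definition T0R x y := nth false (nth [::] T0M x) y.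

Lemma T0R_ok : all (fun x => all (fun y => T0R x y == T0N x y) (iota 0 9)) (iota 0 9).
Proof. by vm_compute. Qed.

Lemma chk_2P3 : all (fun s => ~~ kvalidN 6 twoR s) (allk 6).
Proof. Time by vm_compute. Qed.
Lemma chk_C4 : all (fun s => ~~ kvalidN 4 (cycR 4) s) (allk 4).
Proof. Time by vm_compute. Qed.
Lemma chk_C6 : all (fun s => ~~ kvalidN 6 (cycR 6) s) (allk 6).
Proof. Time by vm_compute. Qed.
Lemma chk_C7 : all (fun s => ~~ kvalidN 7 (cycR 7) s) (allk 7).
Proof. Time by vm_compute. Qed.
Lemma chk_T0 : all (fun s => ~~ kvalidN 9 T0R s) (allk 9).
Proof. Time by vm_compute. Qed.

Lemma T0_HR (x y : 'I_9) : T0_rel x y = T0R x y.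
Proof.
have hx : (x : nat) \in iota 0 9 by rewrite mem_iota ltn_ord.
have hy : (y : nat) \in iota 0 9 by rewrite mem_iota ltn_ord.
have := allP (allP T0R_ok _ hx) _ hy.
by move/eqP ->.
Qed.

Lemma pickf (I : finType) (W : finType) (w0 : W) (P : I -> pred W) :
  (forall i, exists v, P i v) -> exists f : I -> W, forall i, P i (f i).
Proof.
move=> h; exists (fun i => odflt w0 [pick v | P i v]) => i.
case: pickP => [v //|none]; have [v pv] := h i; by rewrite none in pv.
Qed.

Lemma other_idx t (ht : 3 <= t) (i : 'I_t) : exists j : 'I_t, j != i.
Proof.
have h0 : 0 < t by apply: leq_trans ht.
have h1 : 1 < t by apply: leq_trans ht.
case: (eqVneq (Ordinal h0) i) => [<-|ne]; last by exists (Ordinal h0).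
by exists (Ordinal h1); apply/eqP => /(congr1 (@nat_of_ord _)).
Qed.

Theorem proposition5p3 (t : nat) (ht : 3 <= t) (V : finType) (E : rel V)
    (Esym : symmetric E) (Eirr : irreflexive E) :
  is_villa E t ->
  [/\ H_free E twoP3_rel, H_free E (cycle_rel 4), H_free E (cycle_rel 6),
      H_free E (cycle_rel 7) & H_free E T0_rel]
  /\ has_induced E (pentagon_rel t)
  /\ anticonnected E
  /\ (forall v : V, ~ simplicial E v)
  /\ (forall v : V, ~ universal E v).
Proof.
move=> /VF_of [part F].
have np : forall u v : V, part u != part v -> u != v by move=> u v; apply: contra => /eqP ->.
have [a pa] := vA F.
have [bf hbf] : exists bf : 'I_t -> V, forall i,
    (part (bf i) == Some (inl i)) && [forall c, (part c == Some (inr i)) ==> E (bf i) c].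
  apply: (pickf a (P := fun i b => (part b == Some (inl i)) && [forall c, (part c == Some (inr i)) ==> E b c])).
  move=> i; have [b [pb hb]] := vhead F i; exists b.
  by rewrite pb eqxx /=; apply/forallP => c; apply/implyP => /eqP /hb.
have pb i : part (bf i) = Some (inl i) by case/andP: (hbf i) => /eqP.
have hb i c : part c = Some (inr i) -> E (bf i) c.
  by case/andP: (hbf i) => _ /forallP h pc; move: (h c); rewrite pc eqxx.
have [cf pc] : exists cf : 'I_t -> V, forall i, part (cf i) == Some (inr i).
  apply: (pickf a (P := fun i c => part c == Some (inr i))).
  by move=> i; have [c pc] := vC F i; exists c; rewrite /= pc.
have {}pc i : part (cf i) = Some (inr i) by apply/eqP.
have i0 : 'I_t by exists 0; apply: leq_trans ht.
split.
  split.
  - by apply: (free_of Esym F (m := 5) (R := twoR)); last by vm_compute.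
  - by apply: (free_of Esym F (m := 3) (R := cycR 4)); last by vm_compute.
  - by apply: (free_of Esym F (m := 5) (R := cycR 6)); last by vm_compute.
  - by apply: (free_of Esym F (m := 6) (R := cycR 7)); last by vm_compute.
  - by apply: (free_of Esym F (m := 8) (R := T0R)); [exact: T0_HR | exact: chk_T0].
split.
  pose f o := match o with None => a | Some (inl i) => bf i | Some (inr i) => cf i end.
  have pf o : part (f o) = o by case: o => [[i|i]|] /=.
  exists f; split; first by move=> x y /(congr1 part); rewrite !pf.
  case=> [[i|i]|] [[j|j]|] /=.
  - case: (eqVneq i j) => [<-|nij]; first by rewrite Eirr.
    by apply/esym/negbTE; apply: (vBBd F (pb i) (pb j) nij).
  - case: (eqVneq i j) => [<-|nij]; first by rewrite hb.
    by apply/esym/negbTE; apply: (vBCd F (pb i) (pc j) nij).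
  - by rewrite Esym (vAB F pa (pb i)).
  - case: (eqVneq j i) => [<-|nij]; first by rewrite Esym hb.
    by rewrite Esym; apply/esym/negbTE; apply: (vBCd F (pb j) (pc i) nij).
  - case: (eqVneq i j) => [<-|nij]; first by rewrite Eirr.
    by rewrite (vCC F (pc i) (pc j)) // np // !pc; apply: contra_neq nij => -[].
  - by rewrite Esym; apply/esym/negbTE; apply: (vAC F pa (pc i)).
  - by rewrite (vAB F pa (pb j)).
  - by apply/esym/negbTE; apply: (vAC F pa (pc j)).
  - by rewrite Eirr.
have cr u v : u != v -> ~~ E u v -> compl_rel E u v by move=> h1 h2; rewrite /compl_rel h1.
have crs : symmetric (compl_rel E) by move=> u v; rewrite /compl_rel eq_sym Esym.
have toA : forall x, connect (compl_rel E) x a.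
  move=> x; case px: (part x) => [[i|i]|].
  - have [j nji] := other_idx ht i.
    apply: (connect_trans (y := cf j)); apply: connect1; apply: cr.
    + by apply: np; rewrite px pc; apply: contra_neq nji => -[].
    + by apply: (vBCd F px (pc j)); rewrite eq_sym.
    + by apply: np; rewrite pa pc.
    + by rewrite Esym (vAC F pa (pc j)).
  - apply: connect1; apply: cr; first by apply: np; rewrite pa px.
    by rewrite Esym (vAC F pa px).
  - apply: (connect_trans (y := cf i0)); apply: connect1; apply: cr.
    + by apply: np; rewrite px pc.
    + exact: (vAC F px (pc i0)).
    + by apply: np; rewrite pa pc.
    + by rewrite Esym (vAC F pa (pc i0)).
split.
  move=> x y; apply: (connect_trans (toA x)).
  by rewrite (sym_connect_sym crs); apply: toA.
split.
  move=> v; case pv: (part v) => [[i|i]|] hs.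
  - have [c [pc' ec]] := vnbr F pv.
    have nac : a != c by apply: np; rewrite pa pc'.
    have := hs a c; rewrite Esym (vAB F pa pv) ec (negbTE (vAC F pa pc')).
    by move/(_ isT isT nac).
  - have [j nji] := other_idx ht i.
    have ne1 : v != cf j by apply: np; rewrite pv pc; apply: contra_neq nji => -[].
    have ne2 : cf j != bf i by apply: np; rewrite pc pb.
    have := hs (cf j) (bf i).
    rewrite (vCC F pv (pc j) ne1) Esym hb //.
    rewrite Esym (negbTE (vBCd F (pb i) (pc j) _)) ?(eq_sym i) //.
    by move/(_ isT isT ne2).
  - have [j nji] := other_idx ht i0.
    have ne : bf i0 != bf j by apply: np; rewrite !pb; apply: contra_neq nji => -[].
    have := hs (bf i0) (bf j).
    rewrite (vAB F pv (pb i0)) (vAB F pv (pb j)) (negbTE (vBBd F (pb i0) (pb j) _)) ?(eq_sym i0) //.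
    by move/(_ isT isT ne).
move=> v; case pv: (part v) => [[i|i]|] hu.
- have [j nji] := other_idx ht i.
  have ne : cf j != v by apply: np; rewrite pv pc.
  have := hu (cf j); rewrite (negbTE (vBCd F pv (pc j) _)) ?(eq_sym i) //.
  by move/(_ ne).
- have ne : a != v by apply: np; rewrite pv pa.
  have := hu a; rewrite Esym (negbTE (vAC F pa pv)).
  by move/(_ ne).
- have ne : cf i0 != v by apply: np; rewrite pv pc.
  have := hu (cf i0); rewrite (negbTE (vAC F pv (pc i0))).
  by move/(_ ne).
Qed.
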